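(* Let $q$ be a distribution over $[n]$ and $x\in(0,1)$ with $\|q_{-x}\|_0>1$. Then there exists $i^*\in[n]$ such that, with $A=\{j\in[n]: q_j\le q_{i^*}\}$: (i) $\max_{j\in A}q_j=q_{i^*}$; (ii) $q(A)\ge x$; and (iii) $\dfrac{q(A)}{q_{i^*}}\ge\dfrac{\|q_{-x}\|_0-1}{\ln(1/x)}$.
   Context: For $x\ge0$, $q_{-x}$ is the vector obtained from $q$ by iteratively removing its smallest entries, stopping just before the total of the removed entries would exceed $x$. $\|v\|_0$ is the number of nonzero entries of $v$. $q(A)=\sum_{j\in A}q_j$. *)

(* Defs.v *)
From HB Require Import structures.
From mathcomp Require Import all_boot all_order all_algebra.
From mathcomp Require Import reals exp.
Set Implicit Arguments. Unset Strict Implicit. Unset Printing Implicit Defensive.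
Import Order.TTheory GRing.Theory Num.Theory.
Local Open Scope ring_scope.

Section Defs.
Variables (R : realType) (n : nat).

Definition is_distribution (q : 'I_n -> R) : Prop :=
  (forall j, 0 <= q j) /\ \sum_(j < n) q j = 1.

(* Position of index i in the ascending order of the entries of q,
   ties broken by index: number of j with (q j, j) < (q i, i) lexicographically. *)
Definition rank_asc (q : 'I_n -> R) (i : 'I_n) : nat :=
  #|[set j : 'I_n | (q j < q i) || ((q j == q i) && (j < i)%N)]|.

Definition mass_smallest (q : 'I_n -> R) (k : nat) : R :=
  \sum_(j < n | (rank_asc q j < k)%N) q j.

Definition nremoved (q : 'I_n -> R) (x : R) : nat :=
  \max_(k < n.+1 | mass_smallest q k <= x) (k : nat).

Definition qminus (q : 'I_n -> R) (x : R) : 'I_n -> R :=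
  fun i => if (rank_asc q i < nremoved q x)%N then 0 else q i.

Definition norm0 (v : 'I_n -> R) : nat := #|[set i : 'I_n | v i != 0]|.

End Defs.

(* Main.v *)
Require Import Defs.
From HB Require Import structures.
From mathcomp Require Import all_boot all_order all_algebra.
From mathcomp Require Import reals exp.
From mathcomp Require Import sequences.
From mathcomp.algebra_tactics Require Import ring lra.
Import Order.TTheory GRing.Theory Num.Theory.
Local Open Scope ring_scope.

Section Aux.
Variables (R : realType) (n : nat) (q : 'I_n -> R).

Definition lexq (j i : 'I_n) : bool := (q j < q i) || ((q j == q i) && (j < i)%N).

Lemma lexq_trans l j i : lexq l j -> lexq j i -> lexq l i.
Proof.
rewrite /lexq => /orP[h1|/andP[/eqP e1 h1]] /orP[h2|/andP[/eqP e2 h2]].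
- by rewrite (lt_trans h1 h2).
- by rewrite -e2 h1.
- by rewrite e1 h2.
- by rewrite e1 e2 eqxx (ltn_trans h1 h2) orbT.
Qed.

Lemma lexq_total i j : i != j -> lexq i j || lexq j i.
Proof.
move=> nij; rewrite /lexq.
case: (ltgtP (q i) (q j)) => //= _.
case: (ltngtP i j) => // /val_inj eij.
by rewrite eij eqxx in nij.
Qed.

Lemma rank_lt j i : lexq j i -> (rank_asc q j < rank_asc q i)%N.
Proof.
move=> h; rewrite /rank_asc; apply: proper_card; apply/properP; split.
- by apply/subsetP => l; rewrite !inE => hl; exact: (@lexq_trans l j i hl h).
- by exists j; rewrite inE // ltxx ltnn andbF.
Qed.

Lemma rank_ltn i : (rank_asc q i < n)%N.
Proof.
rewrite /rank_asc -[X in (_ < X)%N]card_ord -cardsT; apply: proper_card.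
apply/properP; split; first exact: subsetT.
by exists i; rewrite !inE // ltxx ltnn andbF.
Qed.

Lemma rank_inj : injective (rank_asc q).
Proof.
move=> i j e; apply/eqP; apply/negPn/negP => nij.
by case/orP: (lexq_total _ _ nij) => /(rank_lt _ _); rewrite e ltnn.
Qed.

Lemma rank_sorted j i : (rank_asc q j <= rank_asc q i)%N -> q j <= q i.
Proof.
move=> h; rewrite leNgt; apply/negP => hl.
have : lexq i j by rewrite /lexq hl.
by move/(rank_lt _ _); rewrite ltnNge h.
Qed.

Definition sig (i : 'I_n) : 'I_n := Ordinal (rank_ltn i).
Lemma sig_inj : injective sig.
Proof. by move=> i j /(congr1 val) /= /rank_inj. Qed.
Definition w (t : 'I_n) : 'I_n := invF sig_inj t.
Lemma rank_w t : rank_asc q (w t) = t.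
Proof. by have := f_invF sig_inj t => /(congr1 val). Qed.

Hypothesis q0 : forall j, 0 <= q j.

Lemma le_sum_sub (P Q : pred 'I_n) :
  (forall j, P j -> Q j) -> \sum_(j | P j) q j <= \sum_(j | Q j) q j.
Proof.
move=> PQ; rewrite [X in X <= _]big_mkcond [X in _ <= X]big_mkcond /=.
apply: ler_sum => j _; case: ifP => hP; first by rewrite (PQ _ hP).
by case: ifP.
Qed.

Lemma S_ge0 t : 0 <= mass_smallest q t.
Proof. by apply: sumr_ge0 => j _. Qed.

Lemma S_step (t : 'I_n) : mass_smallest q t.+1 = mass_smallest q t + q (w t).
Proof.
rewrite /mass_smallest (bigID (fun j => rank_asc q j == t)) /= addrC.
congr (_ + _).
  by apply: eq_bigl => j; rewrite ltnS ltn_neqAle andbC.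
apply: big_pred1 => j /=; rewrite ltnS.
apply/andP/eqP => [[_ /eqP e]|->]; last by rewrite rank_w leqnn eqxx.
by apply: sig_inj; apply: val_inj; rewrite /= rank_w e.
Qed.

Lemma S_mono a b : (a <= b)%N -> mass_smallest q a <= mass_smallest q b.
Proof. by move=> ab; apply: le_sum_sub => j /leq_trans; apply. Qed.

End Aux.

From mathcomp Require Import zify.

Lemma card_kept (R : realType) (n : nat) (q : 'I_n -> R) k :
  (#|[set i : 'I_n | (k <= rank_asc q i)%N]| <= n - k)%N.
Proof.
rewrite -(card_imset _ (sig_inj _ _ q)).
apply: (leq_trans (subset_leq_card (_ : _ \subset [set t : 'I_n | (k <= t)%N]))).
  by apply/subsetP => y /imsetP[i]; rewrite inE => hi ->; rewrite inE.
rewrite -sum1_card (eq_bigl (fun i : 'I_n => true && (k <= i)%N)); last first.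
  by move=> i; rewrite inE.
by rewrite -(@big_geq_mkord _ _ _ k n xpredT (fun _ => 1%N)) sum_nat_const_nat muln1.
Qed.

Theorem lemmaC3 (R : realType) (n : nat) (q : 'I_n -> R) (x : R) :
  is_distribution q -> 0 < x < 1 -> (1 < norm0 (qminus q x))%N ->
  exists istar : 'I_n,
    let A := [set j : 'I_n | q j <= q istar] in
    [/\ \big[Num.max/0]_(j in A) q j = q istar,
        x <= \sum_(j in A) q j
      & (norm0 (qminus q x) - 1)%:R / ln (1 / x)
          <= (\sum_(j in A) q j) / q istar].
Proof.
move=> [q0 q1] /andP[x0 x1] hm.
set k := nremoved q x.
set S := mass_smallest q.
have S0 : S 0%N = 0 by rewrite /S /mass_smallest big_pred0 // => j; rewrite ltn0.
have Sn : S n = 1.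
  by rewrite /S /mass_smallest -q1; apply: eq_bigl => j; rewrite rank_ltn.
have Skx : S k <= x.
  rewrite /k /nremoved; apply: (big_ind (fun v : nat => S v <= x)) => //.
  - by rewrite S0 ltW.
  - by move=> a b ha hb; rewrite /maxn; case: ltnP.
have kle : (k <= n)%N by apply/bigmax_leqP => i _; rewrite -ltnS.
have kltn : (k < n)%N.
  rewrite ltn_neqAle kle andbT; apply/eqP => e.
  by move: Skx; rewrite e Sn => h; lra.
have Sk1 : x < S k.+1.
  rewrite ltNge; apply/negP => h.
  have := leq_bigmax_cond (P := fun j : 'I_n.+1 => mass_smallest q j <= x)
     (F := fun j : 'I_n.+1 => nat_of_ord j) (Ordinal (kltn : (k.+1 < n.+1)%N)) h.
  by rewrite /= -/(nremoved q x) -/k ltnn.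
set d := (norm0 (qminus q x) - 1)%N.
have hmk : (norm0 (qminus q x) <= n - k)%N.
  rewrite /norm0; apply: leq_trans (card_kept _ _ q k).
  apply: subset_leq_card; apply/subsetP => i; rewrite !inE /qminus -/k.
  by case: ltnP => [_|//]; rewrite eqxx.
have hd : (0 < d)%N by rewrite /d subn_gt0.
have hdR : 0 < (d%:R : R) by rewrite ltr0n.
have hdN : (d <= n - k.+1)%N by rewrite /d; lia.
set L := ln (1 / x).
have hL : 0 < L by apply: ln_gt0; rewrite ltr_pdivlMr // mul1r.
have Spos t : 0 <= S t by apply: S_ge0.
case: (boolP [exists r : 'I_n, (k < r)%N && (d%:R * q (w _ _ q r) <= L * S r.+1)])
  => [/existsP[r /andP[kr hr]] | /existsPn hall].
- exists (w _ _ q r) => A.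
  have hp : 0 < q (w _ _ q r).
    have kk := S_step _ _ q (Ordinal kltn).
    apply: (lt_le_trans (_ : 0 < q (w _ _ q (Ordinal kltn)))).
      rewrite -/S /= in kk; lra.
    by apply: rank_sorted; rewrite !rank_w /= ltnW.
  have hF : S r.+1 <= \sum_(j in A) q j.
    apply: le_sum_sub => // j hj; rewrite inE; apply: rank_sorted.
    by rewrite rank_w -ltnS.
  split.
  + apply/eqP; rewrite eq_le; apply/andP; split.
      apply: (big_ind (fun v => v <= q (w _ _ q r))) => //.
      * by move=> u v hu hv; rewrite ge_max hu hv.
      * by move=> j; rewrite inE.
    rewrite (bigD1 (w _ _ q r)) /=; first by rewrite le_max lexx.
    by rewrite inE.
  + have := S_mono _ _ q q0 k.+1 r.+1 (leqW kr); rewrite -/S => h; lra.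
  + rewrite ler_pdivlMr // mulrAC ler_pdivrMr //.
    apply: (le_trans hr); rewrite mulrC; apply: ler_wpM2r; [exact: ltW | exact: hF].
- set a := 1 - L / d%:R.
  have step (r : 'I_n) : (k < r)%N -> S r < a * S r.+1.
    move=> kr; have := hall r; rewrite kr /= -ltNge => hlt.
    have hS := S_step _ _ q r; rewrite -/S in hS.
    have : L / d%:R * S r.+1 < q (w _ _ q r).
      by rewrite mulrAC ltr_pdivrMr // [_ * d%:R]mulrC.
    move=> hh; have -> : a * S r.+1 = S r.+1 - L / d%:R * S r.+1 by rewrite /a; ring.
    lra.
  have k1n : (k.+1 < n)%N by lia.
  have ha : 0 <= a.
    have := step (Ordinal k1n) (ltnSn k); have := Spos k.+1; have := Spos k.+2.
    rewrite /=; nra.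
  have key j : (j <= n - k.+1)%N -> S k.+1 <= a ^+ j * S (k.+1 + j)%N.
    elim: j => [|j IH] hj.
      by rewrite expr0 mul1r; apply: (S_mono _ _ q q0); lia.
    have hr : (k.+1 + j < n)%N by lia.
    have := step (Ordinal hr); rewrite /= => /(_ (leq_trans (ltnSn k) (leq_addr _ _))) hs.
    rewrite addnS exprSr -mulrA; apply: (le_trans (IH (ltnW hj))).
    by apply: ler_wpM2l; [exact: exprn_ge0 | exact: ltW].
  have := key _ (leqnn _); rewrite subnKC // Sn mulr1 => h1.
  have a1 : a <= 1.
    have : 0 < L / d%:R by apply: divr_gt0.
    rewrite /a; lra.
  have h2 : a ^+ (n - k.+1) <= a ^+ d by apply: ler_wiXn2l.
  have h3 : a ^+ d <= expR (- (L / d%:R)) ^+ d.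
    apply: lerXn2r; rewrite ?nnegrE ?expR_ge0 //.
    by rewrite /a; apply: expR_ge1Dx.
  have h4 : expR (- (L / d%:R)) ^+ d = x.
    rewrite -expRM_natl mulrN mulrCA mulfV ?mulr1; last by rewrite gt_eqF.
    rewrite /L div1r lnV ?opprK ?lnK //; by rewrite posrE.
  lra.
Qed.
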